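(* For every regular language $L\subseteq\Sigma^*$, there is an isomorphism of $\mathbf{JSL}$-dfas $\mathcal{P}(\mathrm{minDfa}(L^r))\cong[\mathrm{BLQ}(L)]^{\mathsf{op}}$ given by \[\{w_1^{-1}L^r,\ldots,w_n^{-1}L^r\}\mapsto\bigcap_{i=1}^n\overline{\mathrm{At}(w_i^r)},\] where $\mathrm{At}(x)$ is the unique atom of the boolean algebra $\mathrm{BLQ}(L)$ containing the word $x$.
   Context: $u^{-1}L=\{w:uw\in L\}$; $w^r$ is the reversal of $w$ and $L^r=\{w^r:w\in L\}$; $\overline{K}=\Sigma^*\setminus K$. $\mathrm{BLQ}(L)$ is the boolean subalgebra of $\mathcal{P}(\Sigma^* )$ generated by all left derivatives $u^{-1}L$ (finite when $L$ is regular), viewed as a $\mathbf{JSL}$-dfa with order $\subseteq$, transitions $K\mapsto a^{-1}K$, initial state $L$, final states the $K$ with $\epsilon\in K$. The minimal dfa $\mathrm{minDfa}(L^r)$ has states $\{v^{-1}L^r:v\in\Sigma^*\}$, transitions $K\mapsto a^{-1}K$, initial state $L^r$, final states those containing $\epsilon$. For a (deterministic or nondeterministic) finite automaton $N$ with state set $Q$, $\mathcal{P}(N)$ is the $\mathbf{JSL}$-dfa with states $(\mathcal{P}(Q),\cup)$, transitions $X\mapsto\delta_a[X]$, initial state the set of initial states, final states the subsets meeting the final states. A $\mathbf{JSL}$-dfa is a finite semilattice with join-preserving transitions $\delta_a$, an initial state $s_0$ and final states $\{s:s\not\le s_f\}$ for some $s_f$; morphisms are join-preserving maps preserving transitions,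 initial and final states (both ways). The dual $A^{\mathsf{op}}$ has the reversed order, transitions $\delta^*_a(s)=$ largest $t$ with $\delta_a(t)\le s$, initial state the largest non-final state of $A$, final states $\{s:s_0\not\le s\}$. *)

(* Defs.v *)
From Stdlib Require Import ClassicalEpsilon FunctionalExtensionality.
From mathcomp Require Import all_boot.

Set Implicit Arguments.
Unset Strict Implicit.
Unset Printing Implicit Defensive.

Section Langs.
Variable S : finType.

Definition lang := seq S -> Prop.

Definition leftq (u : seq S) (K : lang) : lang := fun w => K (u ++ w).

Definition rev_lang (K : lang) : lang := fun w => K (rev w).

Definition compl (K : lang) : lang := fun w => ~ K w.

Definition regular (L : lang) : Prop :=
  exists (Q : finType) (d : Q -> S -> Q) (q0 : Q) (F : pred Q),
    forall w, L w <-> F (foldl d q0 w).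

Inductive BLQ (L : lang) : lang -> Prop :=
| BLQ_der (u : seq S) : BLQ L (leftq u L)
| BLQ_top : BLQ L (fun _ => True)
| BLQ_compl K : BLQ L K -> BLQ L (compl K)
| BLQ_cap K1 K2 : BLQ L K1 -> BLQ L K2 -> BLQ L (fun w => K1 w /\ K2 w).

Definition atom (L : lang) (K : lang) : Prop :=
  [/\ BLQ L K, exists x, K x &
      forall K', BLQ L K' -> (forall x, K' x -> K x) -> (exists x, K' x) -> K' = K].

Definition At (L : lang) (x : seq S) : lang :=
  epsilon (inhabits (fun _ => False)) (fun K => atom L K /\ K x).

Lemma leftq_cons (a : S) (u : seq S) (K : lang) :
  leftq [:: a] (leftq u K) = leftq (rcons u a) K.
Proof.
apply: functional_extensionality => w; by rewrite /leftq cat_rcons.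
Qed.

Lemma BLQ_delta (L : lang) (a : S) (K : lang) :
  BLQ L K -> BLQ L (leftq [:: a] K).
Proof.
elim => [u| |K0 _ IH|K1 K2 _ IH1 _ IH2].
- rewrite leftq_cons; exact: BLQ_der.
- exact: BLQ_top.
- exact: BLQ_compl IH.
- exact: BLQ_cap IH1 IH2.
Qed.

End Langs.

Record jsl_dfa (S : Type) : Type := JSLDfa {
  jst : Type;
  jle : jst -> jst -> Prop;
  jdelta : S -> jst -> jst;
  jinit : jst;
  jfin : jst -> Prop }.

Definition is_lub (T : Type) (le : T -> T -> Prop) (x y z : T) : Prop :=
  [/\ le x z, le y z & forall t, le x t -> le y t -> le z t].

Definition is_bot (T : Type) (le : T -> T -> Prop) (b : T) : Prop :=
  forall t, le b t.

Definition jsl_morph (S : Type) (A B : jsl_dfa S) (f : jst A -> jst B) : Prop :=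
  [/\ (forall x y z, is_lub (@jle S A) x y z -> is_lub (@jle S B) (f x) (f y) (f z)),
      (forall b, is_bot (@jle S A) b -> is_bot (@jle S B) (f b)),
      (forall a s, f (@jdelta S A a s) = @jdelta S B a (f s)),
      f (@jinit S A) = @jinit S B &
      (forall s, @jfin S A s <-> @jfin S B (f s))].

Definition jsl_iso (S : Type) (A B : jsl_dfa S) (f : jst A -> jst B) : Prop :=
  jsl_morph f /\
  exists g : jst B -> jst A,
    [/\ jsl_morph g, (forall s, g (f s) = s) & (forall t, f (g t) = t)].

Definition jsl_op (S : Type) (A : jsl_dfa S) : jsl_dfa S :=
  @JSLDfa S (jst A)
    (fun x y => @jle S A y x)
    (fun a s => epsilon (inhabits s)
       (fun t => @jle S A (@jdelta S A a t) s /\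
                 forall t', @jle S A (@jdelta S A a t') s -> @jle S A t' t))
    (epsilon (inhabits (@jinit S A))
       (fun t => ~ @jfin S A t /\ forall t', ~ @jfin S A t' -> @jle S A t' t))
    (fun s => ~ @jle S A (@jinit S A) s).

Definition pow_dfa (S Q : Type) (d : S -> Q -> Q) (q0 : Q) (F : Q -> Prop)
  : jsl_dfa S :=
  @JSLDfa S (Q -> Prop)
    (fun X Y => forall q, X q -> Y q)
    (fun a X => fun q => exists p, X p /\ q = d a p)
    (fun q => q = q0)
    (fun X => exists q, X q /\ F q).

Section MinDfa.
Variable S : finType.
Variable L : lang S.

(* states of minDfa(L^r): the languages v^{-1} L^r *)
Definition mstate := {K : lang S | exists v, K = leftq v (rev_lang L)}.

Lemma mstate_delta_proof (a : S) (K : mstate) :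
  exists v, leftq [:: a] (sval K) = leftq v (rev_lang L).
Proof.
case: K => K [v Hv] /=; exists (rcons v a); rewrite Hv; exact: leftq_cons.
Qed.

Definition mdelta (a : S) (K : mstate) : mstate :=
  exist _ (leftq [:: a] (sval K)) (mstate_delta_proof a K).

Definition minit : mstate :=
  exist _ (rev_lang L) (ex_intro _ [::] erefl).

Definition mfinal (K : mstate) : Prop := sval K [::].

Definition pow_minDfa_rev : jsl_dfa S := pow_dfa mdelta minit mfinal.

Definition blq_state := {K : lang S | BLQ L K}.

Definition blq_delta (a : S) (K : blq_state) : blq_state :=
  exist _ (leftq [:: a] (sval K)) (BLQ_delta a (proj2_sig K)).

Definition blq_init : blq_state := exist _ L (BLQ_der L [::]).

Definition blq_dfa : jsl_dfa S :=
  @JSLDfa S blq_state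
    (fun K K' => forall w, sval K w -> sval K' w)
    blq_delta blq_init
    (fun K => sval K [::]).

Definition phi_map (X : mstate -> Prop) : lang S :=
  fun x => forall K : mstate, X K ->
           forall w, sval K = leftq w (rev_lang L) -> compl (At L (rev w)) x.

End MinDfa.

(* Main.v *)
Require Import Defs.
From mathcomp Require Import all_boot.
From Stdlib Require Import ClassicalEpsilon FunctionalExtensionality PropExtensionality ProofIrrelevance Classical.

Lemma lang_ext (S : finType) (K K' : lang S) : (forall w, K w <-> K' w) -> K = K'.
Proof.
move=> H; apply: functional_extensionality => w; apply: propositional_extensionality; exact: H.
Qed.

Lemma iso_of (S0 : Type) (A B : jsl_dfa S0) (f : jst A -> jst B) (g : jst B -> jst A) :
  (forall s, g (f s) = s) -> (forall t, f (g t) = t) ->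
  (forall x y, jle x y <-> jle (f x) (f y)) ->
  (forall a s, f (jdelta a s) = jdelta a (f s)) -> f (jinit A) = jinit B ->
  (forall s, jfin s <-> jfin (f s)) -> jsl_iso f.
Proof.
move=> gf fg Hle Hd Hi Hf.
have Hle' : forall x y, jle x y <-> jle (g x) (g y).
  by move=> x y; rewrite Hle !fg.
split.
  split => //.
  - move=> x y z [H1 H2 H3]; split; [exact/Hle|exact/Hle|].
    move=> t Ht1 Ht2; rewrite -[t]fg; apply/Hle; apply: H3; apply/Hle; by rewrite fg.
  - move=> b Hb t; rewrite -[t]fg; apply/Hle; exact: Hb.
exists g; split => //; split => //.
- move=> x y z [H1 H2 H3]; split; [exact/Hle'|exact/Hle'|].
  move=> t Ht1 Ht2; rewrite -[t]gf; apply/Hle'; apply: H3; apply/Hle'; by rewrite gf.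
- move=> b Hb t; rewrite -[t]gf; apply/Hle'; exact: Hb.
- move=> a t; have := Hd a (g t); rewrite fg => <-; by rewrite gf.
- by rewrite -Hi gf.
- move=> t; have := Hf (g t); rewrite fg => H; by split => /H.
Qed.

Section Main.
Variable S : finType.
Variable L : lang S.
Variables (Q : finType) (d : Q -> S -> Q) (q0 : Q) (F : pred Q).
Hypothesis HL : forall w, L w <-> F (foldl d q0 w).

Definition reachP q := exists u, foldl d q0 u = q.
Definition reach (q : Q) : bool :=
  if excluded_middle_informative (reachP q) then true else false.
Lemma reachE q : reach q = true <-> reachP q.
Proof. rewrite /reach; case: excluded_middle_informative => //. Qed.

Definition rep (q : Q) : seq S := epsilon (inhabits [::]) (fun u => foldl d q0 u = q).
Lemma repP q : reachP q -> foldl d q0 (rep q) = q.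
Proof. move=> H; exact: (epsilon_spec _ _ H). Qed.

Definition vec (x : seq S) : {ffun Q -> bool} := [ffun q => reach q && F (foldl d q x)].

Lemma LF u x : L (u ++ x) <-> F (foldl d (foldl d q0 u) x).
Proof. by rewrite -foldl_cat. Qed.

Lemma v_L x y : vec x = vec y -> forall u, L (u ++ x) -> L (u ++ y).
Proof.
move=> E u; rewrite !LF.
have := congr1 (fun g : {ffun Q -> bool} => g (foldl d q0 u)) E; rewrite !ffunE.
have -> : reach (foldl d q0 u) = true by apply/reachE; exists u.
by move=> /= ->.
Qed.

Lemma L_v x y : (forall u, L (u ++ x) <-> L (u ++ y)) -> vec x = vec y.
Proof.
move=> H; apply/ffunP => q; rewrite !ffunE.
case R: (reach q) => //=.
have Hq := repP q (proj1 (reachE q) R).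
have := H (rep q); rewrite !LF Hq => [[H1 H2]].
by apply/idP/idP.
Qed.

Definition sat (K : lang S) := forall x y, vec x = vec y -> K x -> K y.

Lemma BLQ_sat {K} : BLQ L K -> sat K.
Proof.
elim => [u| |K0 _ IH|K1 K2 _ IH1 _ IH2] x y E.
- exact: v_L.
- by [].
- move=> Hx Hy; apply: Hx; exact: IH Hy.
- by move=> [/(IH1 _ _ E) ? /(IH2 _ _ E) ?].
Qed.

Lemma BLQ_ext {K K'} : BLQ L K -> (forall w, K w <-> K' w) -> BLQ L K'.
Proof. by move=> B /lang_ext <-. Qed.

Lemma BLQ_empty : BLQ L (fun _ => False).
Proof. apply: BLQ_ext (BLQ_compl (BLQ_top L)) _ => w; rewrite /compl; by split. Qed.

Lemma BLQ_union {K1 K2} : BLQ L K1 -> BLQ L K2 -> BLQ L (fun w => K1 w \/ K2 w).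
Proof.
move=> B1 B2; apply: BLQ_ext (BLQ_compl (BLQ_cap (BLQ_compl B1) (BLQ_compl B2))) _ => w.
rewrite /compl; split.
  move=> H; apply: NNPP => N; apply: H; split => ?; apply: N; [left|right]; done.
by move=> [H|H] [H1 H2].
Qed.

Lemma BLQ_bigcap {I : eqType} {G : I -> lang S} : (forall i, BLQ L (G i)) ->
  forall s : seq I, BLQ L (fun y => forall i, i \in s -> G i y).
Proof.
move=> HG; elim => [|a s IH].
  by apply: BLQ_ext (BLQ_top L) _ => w; split.
apply: BLQ_ext (BLQ_cap (HG a) IH) _ => w; split.
  move=> [Ha Hs] i; rewrite in_cons => /orP [/eqP -> //|]; exact: Hs.
move=> H; split; first by apply: H; rewrite mem_head.
by move=> i Hi; apply: H; rewrite in_cons Hi orbT.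
Qed.

Lemma BLQ_bigcup {I : eqType} {G : I -> lang S} : (forall i, BLQ L (G i)) ->
  forall s : seq I, BLQ L (fun y => exists i, i \in s /\ G i y).
Proof.
move=> HG; elim => [|a s IH].
  by apply: BLQ_ext BLQ_empty _ => w; split => // [[i []]].
apply: BLQ_ext (BLQ_union (HG a) IH) _ => w; split.
  move=> [H|[i [Hi H]]]; first by exists a; rewrite mem_head.
  by exists i; rewrite in_cons Hi orbT.
move=> [i []]; rewrite in_cons => /orP [/eqP -> |Hi H]; first by left.
by right; exists i.
Qed.

Definition C (x : seq S) : lang S := fun y => vec y = vec x.

Lemma BLQ_C x : BLQ L (C x).
Proof.
pose G q : lang S := fun y => L (rep q ++ y) <-> L (rep q ++ x).
have HG : forall q, BLQ L (G q).
  move=> q; case: (classic (L (rep q ++ x))) => Hx.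
    apply: BLQ_ext (BLQ_der L (rep q)) _ => w; rewrite /G /leftq; tauto.
  apply: BLQ_ext (BLQ_compl (BLQ_der L (rep q))) _ => w; rewrite /G /leftq /compl; tauto.
apply: BLQ_ext (BLQ_bigcap HG (enum Q)) _ => y; split.
  move=> H; apply/ffunP => q; rewrite !ffunE.
  case R: (reach q) => //=.
  have Hq := repP q (proj1 (reachE q) R).
  have := H q (mem_enum _ q); rewrite /G !LF Hq => [[H1 H2]].
  by apply/idP/idP.
move=> E q _; rewrite /G; split; apply: v_L => //.
Qed.

Lemma sat_BLQ K : sat K -> BLQ L K.
Proof.
move=> HK.
pose G (g : {ffun Q -> bool}) : lang S := fun y => (exists x, K x /\ vec x = g) /\ vec y = g.
have HG : forall g, BLQ L (G g).
  move=> g; case: (classic (exists x, K x /\ vec x = g)) => [[x [Kx E]]|N].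
    apply: BLQ_ext (BLQ_C x) _ => y; rewrite /G /C E; split => [->|[_ ->]] //.
    by split => //; exists x.
  by apply: BLQ_ext BLQ_empty _ => y; rewrite /G; split => // [[]].
apply: BLQ_ext (BLQ_bigcup HG (enum {ffun Q -> bool})) _ => y; split.
  move=> [g [_ [[x [Kx E]] E']]]; apply: HK Kx; by rewrite E E'.
move=> Ky; exists (vec y); split; first exact: mem_enum.
by split => //; exists y.
Qed.

Lemma BLQ_iff K : BLQ L K <-> sat K.
Proof. split; [exact: BLQ_sat | exact: sat_BLQ]. Qed.

Lemma atom_C x : atom L (C x).
Proof.
split; first exact: BLQ_C.
  by exists x.
move=> K' B sub [y Ky]; apply: lang_ext => z; split; first exact: sub.
move=> Cz; have Ey := sub _ Ky; rewrite /C in Cz Ey.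
apply: (BLQ_sat B y z _ Ky); by rewrite Cz Ey.
Qed.

Lemma atom_unique K x : atom L K -> K x -> K = C x.
Proof.
move=> [BK _ min] Kx; symmetry; apply: min.
- exact: BLQ_C.
- move=> z Cz; apply: (BLQ_sat BK) Kx; by rewrite Cz.
- by exists x.
Qed.

Lemma At_E x : At L x = C x.
Proof.
rewrite /At.
have Hex : exists K, atom L K /\ K x by exists (C x); split; [exact: atom_C|].
case: (epsilon_spec (inhabits (fun _ => False)) _ Hex) => Ha Hx.
exact: atom_unique Ha Hx.
Qed.


Lemma leftq_v w w' :
  leftq w (rev_lang L) = leftq w' (rev_lang L) <-> vec (rev w) = vec (rev w').
Proof.
split => [E|E].
  apply: L_v => u.
  have := congr1 (fun K : lang S => K (rev u)) E.
  rewrite /leftq /rev_lang !rev_cat revK => ->; by [].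
apply: lang_ext => z; rewrite /leftq /rev_lang !rev_cat; split; apply: v_L => //.
Qed.

Definition wit (K : mstate L) : seq S :=
  epsilon (inhabits [::]) (fun w => sval K = leftq w (rev_lang L)).
Lemma witP K : sval K = leftq (wit K) (rev_lang L).
Proof. exact: (epsilon_spec _ _ (proj2_sig K)). Qed.

Definition gK (K : mstate L) := vec (rev (wit K)).

Lemma gK_spec K w : sval K = leftq w (rev_lang L) -> gK K = vec (rev w).
Proof. move=> E; apply/leftq_v; by rewrite -witP. Qed.

Lemma gK_inj K K' : gK K = gK K' -> K = K'.
Proof.
move=> /leftq_v; rewrite -!witP.
case: K => [k pk]; case: K' => [k' pk'] /= E; subst k'; f_equal; apply: proof_irrelevance.
Qed.

Lemma phi_E (X : mstate L -> Prop) x :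
  phi_map X x <-> forall K, X K -> vec x <> gK K.
Proof.
rewrite /phi_map; split => H K XK.
  have := H K XK (wit K) (witP K); rewrite /compl At_E /C; by [].
move=> w E; rewrite /compl At_E /C -(gK_spec _ _ E); exact: H.
Qed.

Definition vc (a : S) (g : {ffun Q -> bool}) : {ffun Q -> bool} :=
  [ffun q => reach q && g (d q a)].

Lemma vec_cons a y : vec (a :: y) = vc a (vec y).
Proof.
apply/ffunP => q; rewrite !ffunE /=.
case R: (reach q) => //=.
have -> : reach (d q a) = true.
  apply/reachE; case/reachE: R => u Hu; exists (rcons u a); by rewrite foldl_rcons Hu.
by [].
Qed.

Lemma gK_delta a K : gK (mdelta a K) = vc a (gK K).
Proof.
rewrite (@gK_spec (mdelta a K) (rcons (wit K) a)).
  by rewrite rev_rcons vec_cons.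
by rewrite /= witP leftq_cons.
Qed.

Lemma gK_minit : gK (minit L) = vec [::].
Proof. exact: (@gK_spec (minit L) [::]). Qed.

Lemma mfinal_E K : mfinal K <-> L (rev (wit K)).
Proof. rewrite /mfinal witP /leftq /rev_lang cats0; by []. Qed.

Definition mst_of (x : seq S) : mstate L :=
  exist _ (leftq (rev x) (rev_lang L)) (ex_intro _ (rev x) erefl).
Lemma gK_mst x : gK (mst_of x) = vec x.
Proof. by rewrite (@gK_spec (mst_of x) (rev x)) // revK. Qed.

Lemma sat_phi (X : mstate L -> Prop) : BLQ L (phi_map X).
Proof.
apply: sat_BLQ => x y E; rewrite !phi_E => H K XK; rewrite -E; exact: H.
Qed.

Lemma blq_eq (t1 t2 : blq_state L) : (forall w, sval t1 w <-> sval t2 w) -> t1 = t2.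
Proof.
move=> /lang_ext; case: t1 => [k pk]; case: t2 => [k' pk'] /= E; subst k'; f_equal; apply: proof_irrelevance.
Qed.


Definition fmap (X : mstate L -> Prop) : blq_state L :=
  exist (fun K => BLQ L K) (phi_map X) (sat_phi X).
Definition hmap (T : blq_state L) : mstate L -> Prop :=
  fun K => forall x, vec x = gK K -> ~ sval T x.

Lemma hf X : hmap (fmap X) = X.
Proof.
apply: functional_extensionality => K; apply: propositional_extensionality.
rewrite /hmap /=; split.
  move=> H; have := H (rev (wit K)) erefl; rewrite phi_E => N.
  apply: NNPP => NX; apply: N => K' XK' E.
  have EK : K' = K by apply: gK_inj; rewrite -E.
  by apply: NX; rewrite -EK.
move=> XK x E; rewrite phi_E => H; exact: H K XK E.
Qed.

Lemma fh T : fmap (hmap T) = T.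
Proof.
apply: blq_eq => w /=; rewrite phi_E /hmap; split.
  move=> H; apply: NNPP => Tw.
  apply: (H (mst_of w)); last by rewrite gK_mst.
  move=> x; rewrite gK_mst => E Tx; apply: Tw.
  apply: (BLQ_sat (proj2_sig T) x w) => //.
move=> Tw K HK E; exact: HK w E Tw.
Qed.

Lemma f_le (X Y : mstate L -> Prop) : (forall q, X q -> Y q) <->
  (forall w, phi_map Y w -> phi_map X w).
Proof.
split.
  move=> H w; rewrite !phi_E => HY K XK; exact: HY K (H K XK).
move=> H K XK; apply: NNPP => NY.
have := H (rev (wit K)); rewrite !phi_E => H'.
apply: (H' _ K XK) => //.
move=> K' YK' E; have EK : K' = K by apply: gK_inj; rewrite -E.
by apply: NY; rewrite -EK.
Qed.

Lemma f_delta a X : fmap (@jdelta _ (pow_minDfa_rev L) a X) = @jdelta _ (jsl_op (blq_dfa L)) a (fmap X).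
Proof.
rewrite /=.
set P := (fun t : blq_state L => _ /\ _).
have HP : P (fmap (fun q => exists p, X p /\ q = mdelta a p)).
  split.
    move=> w; rewrite /leftq /= !phi_E => H K XK E.
    apply: (H (mdelta a K)); first by exists K.
    rewrite gK_delta -E vec_cons; by [].
  move=> t' Ht' y t'y /=; rewrite phi_E => K' [p [Xp ->]] E.
  have Ex : vec (a :: rev (wit p)) = vec y by rewrite E gK_delta vec_cons.
  have := Ht' (rev (wit p)) (BLQ_sat (proj2_sig t') _ _ (esym Ex) t'y).
  rewrite /= phi_E => H; exact: H p Xp erefl.
have Hex : exists t, P t by exists (fmap (fun q => exists p, X p /\ q = mdelta a p)).
have := epsilon_spec (inhabits (fmap X)) P Hex.
move: HP; rewrite /P => [[G1 H1]] [G2 H2].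
apply: blq_eq => w; split; [exact: (H2 _ G1) | exact: (H1 _ G2)].
Qed.

Lemma f_init : fmap (jinit (pow_minDfa_rev L)) = jinit (jsl_op (blq_dfa L)).
Proof.
rewrite /=.
set P := (fun t : blq_state L => _ /\ _).
have HP : P (fmap (fun q => q = minit L)).
  split.
    rewrite /= phi_E => H; exact: H (minit L) erefl (esym gK_minit).
  move=> t' Ht' y t'y /=; rewrite phi_E => K -> E; apply: Ht'.
  rewrite gK_minit in E; exact: (BLQ_sat (proj2_sig t') y [::] E t'y).
have Hex : exists t, P t by exists (fmap (fun q => q = minit L)).
have := epsilon_spec (inhabits (blq_init L)) P Hex.
move: HP; rewrite /P => [[G1 H1]] [G2 H2].
apply: blq_eq => w; split; [exact: (H2 _ G1) | exact: (H1 _ G2)].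
Qed.

Lemma f_fin X : @jfin _ (pow_minDfa_rev L) X <-> @jfin _ (jsl_op (blq_dfa L)) (fmap X).
Proof.
rewrite /=; split.
  move=> [K [XK /mfinal_E HK]] H.
  have := H _ HK; rewrite phi_E => H'; exact: H' K XK erefl.
move=> H; apply: NNPP => N; apply: H => w Lw; rewrite phi_E => K XK E.
apply: N; exists K; split => //; apply/mfinal_E.
have E' : vec w = vec (rev (wit K)) by [].
exact: (v_L _ _ E' [::] Lw).
Qed.

Lemma main_sec :
  (forall w w' : seq S, leftq w (rev_lang L) = leftq w' (rev_lang L) ->
     At L (rev w) = At L (rev w')) /\
  exists f : jst (pow_minDfa_rev L) -> jst (jsl_op (blq_dfa L)),
    jsl_iso f /\
    forall X : mstate L -> Prop, sval (f X : blq_state L) = phi_map X.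
Proof.
split.
  by move=> w w' /leftq_v E; rewrite !At_E /C E.
exists fmap; split => //.
apply: (@iso_of _ (pow_minDfa_rev L) (jsl_op (blq_dfa L)) fmap hmap).
- exact: hf.
- exact: fh.
- move=> X Y; exact: f_le.
- exact: f_delta.
- exact: f_init.
- exact: f_fin.
Qed.

End Main.

Theorem proposition3p12 (S : finType) (L : lang S) :
  regular L ->
  (forall w w' : seq S, leftq w (rev_lang L) = leftq w' (rev_lang L) ->
     At L (rev w) = At L (rev w')) /\
  exists f : jst (pow_minDfa_rev L) -> jst (jsl_op (blq_dfa L)),
    jsl_iso f /\
    forall X : mstate L -> Prop, sval (f X : blq_state L) = phi_map X.
Proof.
move=> [Q [d [q0 [F HL]]]]; exact: (@main_sec S L Q d q0 F HL).
Qed.
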